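(* Let $H=((0,100],(0,100],p_1,p_2)$ be the two-player game with $p_1(s_1,s_2)=s_1(100-s_1)$ if $s_1<s_2$, $=s_1(100-s_1)/2$ if $s_1=s_2$, $=0$ if $s_1>s_2$, and symmetrically $p_2(s_1,s_2)=s_2(100-s_2)$ if $s_2<s_1$, $=s_2(100-s_2)/2$ if $s_1=s_2$, $=0$ if $s_2>s_1$; take the pure belief structure. Then: (a) $\overline{LR}(H)=(\{50\},\{50\})$ and $(\{50\},\{50\})$ is a fixpoint of $\overline{LR}$, so the outcome of $\overline{LR}$ is $(\{50\},\{50\})$; (b) the operator $R$ defined by $R(H):=((0,50],(0,50])$ and $R(G):=\overline{LR}(G)$ for $G\neq H$ is a relaxation of $\overline{LR}$ whose outcome is $(\emptyset,\emptyset)$; hence $\overline{LR}$ is not order independent; (c) $\overline{GR}(H)=(\{50\},\{50\})$ and $\overline{GR}^2=(\emptyset,\emptyset)$, so the outcome of $\overline{GR}$ is $(\emptyset,\emptyset)$; (d) $LR^1=(\{50\},\{50\})$ while $LR^2$ contains the joint strategy $(49,49)$, so $LR^2\not\subseteq LR^1$.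
   Context: Restrictions of $H$ are pairs $(S_1,S_2)$ with $S_i\subseteq(0,100]$, ordered componentwise. Pure belief structure: beliefs of player $i$ in $G=(S_1,S_2)$ are the opponent's strategies in $S_{-i}$. $s_i\in BR_G(\mu_i)$ iff $p_i(s_i,\mu_i)\ge p_i(s_i',\mu_i)$ for all $s_i'\in S_i$. $GR(G)_i:=\{s_i\mid\exists\mu_i\in S_{-i}: s_i\in BR_H(\mu_i)\}$; $LR(G)_i:=\{s_i\mid\exists\mu_i\in S_{-i}: s_i\in BR_G(\mu_i)\}$; $\overline{T}(G):=T(G)\cap G$. Iterations: $T^0:=H$, $T^{\alpha+1}:=T(T^\alpha)$, $T^\beta:=\bigcap_{\alpha<\beta}T^\alpha$ for limit $\beta$; outcome = first iterate with $T^{\alpha+1}=T^\alpha$. $R$ is a relaxation of $T$ if for all ordinals $\alpha$: (1) $T(R^\alpha)\subseteq R(R^\alpha)$; (2) if $T(R^\alpha)\subseteq R^\alpha$ then $R(R^\alpha)\subseteq R^\alpha$; (3) if $R(R^\alpha)=R^\alpha$ then $T(R^\alpha)=R^\alpha$. $T$ is order independent if the set of outcomes of relaxations of $T$ has at most one element. *)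

(* Defs.v *)
From Stdlib Require Import Reals ClassicalDescription.
Open Scope R_scope.

Definition Restr : Type := ((R -> Prop) * (R -> Prop))%type.

Definition rsub (G G' : Restr) : Prop :=
  (forall x, fst G x -> fst G' x) /\ (forall x, snd G x -> snd G' x).
Definition rint (G G' : Restr) : Restr :=
  (fun x => fst G x /\ fst G' x, fun x => snd G x /\ snd G' x).

Definition Hstrat (x : R) : Prop := 0 < x <= 100.
Definition Hgame : Restr := (Hstrat, Hstrat).

Definition p1 (s1 s2 : R) : R :=
  if Rlt_dec s1 s2 then s1 * (100 - s1)
  else if Rlt_dec s2 s1 then 0
  else s1 * (100 - s1) / 2.

Definition p2 (s1 s2 : R) : R :=
  if Rlt_dec s2 s1 then s2 * (100 - s2)
  else if Rlt_dec s1 s2 then 0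
  else s2 * (100 - s2) / 2.

(** Best responses in a restriction with strategy sets S (pure beliefs).
    The responding strategy ranges over the strategies of H. *)
Definition BR1 (S1 : R -> Prop) (mu s1 : R) : Prop :=
  Hstrat s1 /\ forall s', S1 s' -> p1 s1 mu >= p1 s' mu.
Definition BR2 (S2 : R -> Prop) (mu s2 : R) : Prop :=
  Hstrat s2 /\ forall s', S2 s' -> p2 mu s2 >= p2 mu s'.

Definition GR (G : Restr) : Restr :=
  (fun s1 => exists mu, snd G mu /\ BR1 (fst Hgame) mu s1,
   fun s2 => exists mu, fst G mu /\ BR2 (snd Hgame) mu s2).
Definition LR (G : Restr) : Restr :=
  (fun s1 => exists mu, snd G mu /\ BR1 (fst G) mu s1,
   fun s2 => exists mu, fst G mu /\ BR2 (snd G) mu s2).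

Definition bar (T : Restr -> Restr) (G : Restr) : Restr := rint (T G) G.
Definition GRbar := bar GR.
Definition LRbar := bar LR.

(** Ordinals are represented by arbitrary
    well-orders (every ordinal is one, every well-order is isomorphic to
    an ordinal); an iteration of T along a well-order is a map f
    satisfying the transfinite recursion equations at every point. *)
Record wellorder := WO {
  wo_car :> Type;
  wo_lt : wo_car -> wo_car -> Prop;
  wo_wf : well_founded wo_lt;
  wo_trans : forall x y z, wo_lt x y -> wo_lt y z -> wo_lt x z;
  wo_total : forall x y, wo_lt x y \/ x = y \/ wo_lt y x
}.

Definition is_iteration (T : Restr -> Restr) (A : wellorder) (f : A -> Restr) : Prop :=
  forall a : A,
    ((forall b, ~ wo_lt A b a) -> f a = Hgame) /\
    (forall b, wo_lt A b a -> (forall c, wo_lt A c a -> wo_lt A c b \/ c = b) ->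
       f a = T (f b)) /\
    ((exists b, wo_lt A b a) ->
     (forall b, wo_lt A b a -> exists c, wo_lt A b c /\ wo_lt A c a) ->
       f a = (fun x => forall b, wo_lt A b a -> fst (f b) x,
              fun x => forall b, wo_lt A b a -> snd (f b) x)).

Definition outcome (T : Restr -> Restr) (G : Restr) : Prop :=
  exists (A : wellorder) (f : A -> Restr) (a : A),
    is_iteration T A f /\ T (f a) = f a /\ f a = G /\
    (forall b, wo_lt A b a -> T (f b) <> f b).

Definition relaxation (T Rop : Restr -> Restr) : Prop :=
  forall (A : wellorder) (f : A -> Restr), is_iteration Rop A f ->
  forall a : A,
    rsub (T (f a)) (Rop (f a)) /\
    (rsub (T (f a)) (f a) -> rsub (Rop (f a)) (f a)) /\
    (Rop (f a) = f a -> T (f a) = f a).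

Definition order_independent (T : Restr -> Restr) : Prop :=
  forall R1 R2 G1 G2, relaxation T R1 -> relaxation T R2 ->
    outcome R1 G1 -> outcome R2 G2 -> G1 = G2.

Definition s50 : Restr := (fun x => x = 50, fun x => x = 50).
Definition emptyR : Restr := (fun _ => False, fun _ => False).
Definition half50 : Restr := (fun x => 0 < x <= 50, fun x => 0 < x <= 50).

Definition Rop (G : Restr) : Restr :=
  if excluded_middle_informative (G = Hgame) then half50 else LRbar G.

(* Main.v *)
Require Import Defs.
From Stdlib Require Import Reals.
From Stdlib Require Import Lra Lia Psatz Arith FunctionalExtensionality PropExtensionality Classical ClassicalDescription.
Open Scope R_scope.

Lemma restr_ext (G G' : Restr) :
  (forall x, fst G x <-> fst G' x) -> (forall x, snd G x <-> snd G' x) -> G = G'.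
Proof.
  destruct G as [a b], G' as [c d]; simpl; intros H1 H2.
  f_equal; apply functional_extensionality; intro x; apply propositional_extensionality; auto.
Qed.

Lemma restr_neq_fst (G G' : Restr) x : fst G x -> ~ fst G' x -> G <> G'.
Proof. intros H1 H2 E; subst; tauto. Qed.

Lemma p1_lt s m : s < m -> p1 s m = s * (100 - s).
Proof. intro h; unfold p1; destruct (Rlt_dec s m); [reflexivity|lra]. Qed.
Lemma p1_eq s : p1 s s = s * (100 - s) / 2.
Proof. unfold p1; destruct (Rlt_dec s s); [lra|]; reflexivity. Qed.
Lemma p1_gt s m : m < s -> p1 s m = 0.
Proof. intro h; unfold p1; destruct (Rlt_dec s m); [lra|]; destruct (Rlt_dec m s); [reflexivity|lra]. Qed.

Lemma noBR (S : R -> Prop) mu s : 0 < mu <= 50 -> (forall x, 0 < x < mu -> S x) -> ~ BR1 S mu s.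
Proof.
  intros hm hS [hs hb]. unfold Hstrat in hs.
  destruct (Rtotal_order s mu) as [h|[h|h]].
  - specialize (hb ((s+mu)/2) (hS ((s+mu)/2) ltac:(lra))).
    rewrite (p1_lt s mu h), (p1_lt ((s+mu)/2) mu ltac:(lra)) in hb.
    nra.
  - subst s. specialize (hb (mu/2) (hS (mu/2) ltac:(lra))).
    rewrite p1_eq, (p1_lt (mu/2) mu ltac:(lra)) in hb. nra.
  - specialize (hb (mu/2) (hS (mu/2) ltac:(lra))).
    rewrite (p1_gt s mu h), (p1_lt (mu/2) mu ltac:(lra)) in hb. nra.
Qed.

Lemma BR_H mu s : Hstrat mu -> BR1 Hstrat mu s -> s = 50.
Proof.
  intros hm hb.
  destruct (Rle_lt_dec mu 50) as [h|h].
  - exfalso; apply (noBR Hstrat mu s); [unfold Hstrat in hm; lra| |exact hb].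
    intros; unfold Hstrat in *; lra.
  - destruct hb as [hs hb]. specialize (hb 50 ltac:(unfold Hstrat; lra)).
    rewrite (p1_lt 50 mu h) in hb. unfold Hstrat in *.
    destruct (Rtotal_order s mu) as [h'|[h'|h']].
    + rewrite (p1_lt s mu h') in hb. nra.
    + subst; rewrite p1_eq in hb; nra.
    + rewrite (p1_gt s mu h') in hb; lra.
Qed.

Lemma BR_H50 mu : 50 < mu <= 100 -> BR1 Hstrat mu 50.
Proof.
  intros hm; split; [unfold Hstrat; lra|].
  intros s' hs'; unfold Hstrat in hs'. rewrite (p1_lt 50 mu ltac:(lra)).
  destruct (Rtotal_order s' mu) as [h'|[h'|h']].
  + rewrite (p1_lt s' mu h'). pose proof (Rle_0_sqr (s'-50)); unfold Rsqr in *; lra.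
  + subst; rewrite p1_eq; pose proof (Rle_0_sqr (mu-50)); unfold Rsqr in *; lra.
  + rewrite (p1_gt s' mu h'); lra.
Qed.

Lemma LR_H : LR Hgame = s50.
Proof.
  apply restr_ext; simpl; intro x; split.
  - intros [mu [hm hb]]. exact (BR_H mu x hm hb).
  - intros ->. exists 100. split; [unfold Hstrat; lra|apply BR_H50; lra].
  - intros [mu [hm hb]]. exact (BR_H mu x hm hb).
  - intros ->. exists 100. split; [unfold Hstrat; lra|apply BR_H50; lra].
Qed.

Lemma GR_H : GR Hgame = s50.
Proof. exact LR_H. Qed.

Lemma LRbar_H : LRbar Hgame = s50.
Proof.
  unfold LRbar, bar; rewrite LR_H. apply restr_ext; simpl; intro x; split;
  try tauto; intros ->; split; auto; unfold Hstrat; lra.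
Qed.

Lemma GRbar_H : GRbar Hgame = s50.
Proof. exact LRbar_H. Qed.

Lemma BR50 : BR1 (fun x => x = 50) 50 50.
Proof. split; [unfold Hstrat; lra|]. intros s' ->; lra. Qed.

Lemma LRbar_s50 : LRbar s50 = s50.
Proof.
  apply restr_ext; simpl; intro x; split; try tauto; intros ->; split; auto;
  exists 50; split; auto; exact BR50.
Qed.

Lemma LR_s50_49 : fst (LR s50) 49 /\ snd (LR s50) 49.
Proof.
  assert (B : BR1 (fun x => x = 50) 50 49).
  { split; [unfold Hstrat; lra|]. intros s' ->.
    rewrite (p1_lt 49 50 ltac:(lra)), p1_eq; lra. }
  split; exists 50; (split; [reflexivity|exact B]).
Qed.

Lemma GRbar_s50 : GRbar s50 = emptyR.
Proof.
  apply restr_ext; simpl; intro x; split; try tauto;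
  intros [[mu [hm hb]] _]; subst mu;
  apply (noBR Hstrat 50 x ltac:(lra)); auto; intros; unfold Hstrat; lra.
Qed.

Lemma GRbar_empty : GRbar emptyR = emptyR.
Proof. apply restr_ext; simpl; intro x; tauto. Qed.
Lemma LRbar_empty : LRbar emptyR = emptyR.
Proof. apply restr_ext; simpl; intro x; tauto. Qed.

Lemma LRbar_half : LRbar half50 = emptyR.
Proof.
  apply restr_ext; simpl; intro x; split; try tauto;
  intros [[mu [hm hb]] _];
  apply (noBR (fun x => 0 < x <= 50) mu x hm); auto; intros; lra.
Qed.

Lemma s50_neq_H : s50 <> Hgame.
Proof. apply not_eq_sym; apply (restr_neq_fst _ _ 100); simpl; unfold Hstrat; lra. Qed.
Lemma half_neq_H : half50 <> Hgame.
Proof. apply not_eq_sym; apply (restr_neq_fst _ _ 100); simpl; unfold Hstrat; lra. Qed.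
Lemma empty_neq_s50 : emptyR <> s50.
Proof. apply not_eq_sym; apply (restr_neq_fst _ _ 50); simpl; auto. Qed.
Lemma empty_neq_half : emptyR <> half50.
Proof. apply not_eq_sym; apply (restr_neq_fst _ _ 50); simpl; auto; lra. Qed.

Lemma Rop_H : Rop Hgame = half50.
Proof. unfold Rop; destruct (excluded_middle_informative (Hgame = Hgame)); tauto. Qed.
Lemma Rop_other G : G <> Hgame -> Rop G = LRbar G.
Proof. intro h; unfold Rop; destruct (excluded_middle_informative (G = Hgame)); tauto. Qed.

Definition natWO : wellorder := WO nat lt lt_wf Nat.lt_trans Nat.lt_total.

Lemma nat_iter (T : Restr -> Restr) : is_iteration T natWO (fun n => Nat.iter n T Hgame).
Proof.
  intro a; simpl; split; [|split].
  - intro h; destruct a as [|a]; [reflexivity|]. exfalso; apply (h a); lia.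
  - intros b hb hc. destruct (Nat.eq_dec a (S b)) as [->|ne]; [reflexivity|].
    exfalso. destruct (hc (S b)) as [h|h]; lia.
  - intros [b hb] hl. exfalso. destruct (hl (a - 1)%nat ltac:(lia)) as [c hc]; lia.
Qed.

Lemma outcome_nat (T : Restr -> Restr) (n : nat) G :
  Nat.iter n T Hgame = G -> T G = G ->
  (forall b, (b < n)%nat -> T (Nat.iter b T Hgame) <> Nat.iter b T Hgame) ->
  outcome T G.
Proof.
  intros h1 h2 h3. exists natWO, (fun n => Nat.iter n T Hgame), n.
  split; [apply nat_iter|]. simpl. rewrite h1. auto.
Qed.

Lemma relax_refl T : relaxation T T.
Proof. intros A f _ a; split; [|split]; intros; [split; auto|auto|auto]. Qed.

Lemma relax_Rop : relaxation LRbar Rop.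
Proof.
  intros A f _ a. set (G := f a).
  destruct (classic (G = Hgame)) as [e|ne].
  - rewrite e, Rop_H, LRbar_H. split; [|split].
    + split; simpl; intros x ->; lra.
    + intros _; split; simpl; intros x hx; unfold Hstrat; lra.
    + intro h; exfalso; exact (half_neq_H h).
  - rewrite (Rop_other G ne). split; [|split]; auto. split; auto.
Qed.

Lemma out_LRbar : outcome LRbar s50.
Proof.
  apply (outcome_nat _ 1); simpl; [apply LRbar_H|apply LRbar_s50|].
  intros b hb; assert (b = 0%nat) by lia; subst; simpl; rewrite LRbar_H; exact s50_neq_H.
Qed.

Theorem mainTheorem14 :
  (* (a) *)
  (LRbar Hgame = s50 /\ LRbar s50 = s50 /\ outcome LRbar s50) /\
  (* (b) *)
  (relaxation LRbar Rop /\ outcome Rop emptyR /\ ~ order_independent LRbar) /\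
  (* (c) *)
  (GRbar Hgame = s50 /\ GRbar (GRbar Hgame) = emptyR /\ outcome GRbar emptyR) /\
  (* (d) *)
  (LR Hgame = s50 /\ fst (LR (LR Hgame)) 49 /\ snd (LR (LR Hgame)) 49 /\
   ~ rsub (LR (LR Hgame)) (LR Hgame)).
Proof.
  assert (ORop : outcome Rop emptyR).
  { apply (outcome_nat _ 2); simpl.
    - rewrite Rop_H, (Rop_other _ half_neq_H). apply LRbar_half.
    - rewrite (Rop_other _ (not_eq_sym (restr_neq_fst Hgame emptyR 100
        ltac:(simpl; unfold Hstrat; lra) ltac:(simpl; auto)))). apply LRbar_empty.
    - intros b hb. destruct b as [|[|b]]; [| |lia]; simpl.
      + rewrite Rop_H; exact half_neq_H.
      + rewrite Rop_H, (Rop_other _ half_neq_H), LRbar_half; exact empty_neq_half. }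
  split; [split; [apply LRbar_H|split; [apply LRbar_s50|apply out_LRbar]]|].
  split; [split; [apply relax_Rop|split; [exact ORop|]]|].
  { intro OI. apply empty_neq_s50. symmetry.
    exact (OI LRbar Rop s50 emptyR (relax_refl _) relax_Rop out_LRbar ORop). }
  split.
  - split; [apply GRbar_H|split; [rewrite GRbar_H; apply GRbar_s50|]].
    apply (outcome_nat _ 2); simpl.
    + rewrite GRbar_H; apply GRbar_s50.
    + apply GRbar_empty.
    + intros b hb. destruct b as [|[|b]]; [| |lia]; simpl.
      * rewrite GRbar_H; exact s50_neq_H.
      * rewrite GRbar_H, GRbar_s50; exact empty_neq_s50.
  - rewrite LR_H. split; [reflexivity|]. destruct LR_s50_49 as [h1 h2].
    split; [exact h1|split; [exact h2|]].
    intros [hs _]. specialize (hs 49 h1). simpl in hs. lra.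
Qed.
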